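(* Let $(\tau,R)$ be a generic $M$-layer model and $\psi=\Psi(\tau,R)$. Then $U_\psi\subset\mathbb{R}^{M+1}$ is a convex open set containing $\tau$, and $\mathcal{R}_\psi\subset(-1,1)^{M+1}$ is an open set containing $R$.
   Context: An $M$-layer model ($M\ge1$) is $(\tau,R)$ with $\tau\in\mathbb{R}^{M+1}_{>0}$, $R\in(-1,1)^{M+1}$. $\mathfrak{L}_M\subset\mathbb{Z}^{M+1}_{\geq0}$: all $k$ with $k_0=1$ and $k_n>0\Rightarrow k_{n-1}>0$ ($1\le n\le M$); $\mathfrak{L}^\tau_M=\{k\in\mathfrak{L}_M:\langle k,\tau\rangle\le\langle\mathbb{1},\tau\rangle\}$. Amplitude polynomial: $\mathbb{1}=(1,\ldots,1)$; inequalities and $\min$ entrywise; $x^k=\prod_n x_n^{k_n}$, $\binom{k}{b}=\prod_n\binom{k_n}{b_n}$; $\tilde k=(k_1,\ldots,k_M,0)$, $u=\min\{\mathbb{1},\tilde k\}$, $V(k)=\{b:u\le b\le\min\{k,\tilde k\}\}$, $a(x,k)=\sum_{b\in V(k)}\binom{k}{b}\binom{\tilde k-u}{b-u}(-x)^{\tilde k-b}x^{k-b}\prod_n(1-x_n^2)^{b_n}$. Data: $D^{(\tau,R)}(t)=\sum_{k\in\mathfrak{L}^\tau_M}a(R,k)\delta(t-\langle k,\tau\rangle)$, in normal form $\sum_{n=1}^d\alpha_n\delta(t-\sigma_n)$ ($\alpha_n\ne0$, $\sigma_1<\cdots<\sigma_d$). With $S=\{\sigma_n\}$, the enumeration function $\Psi(\tau,R):\mathfrak{L}^\tau_M\to\{0,\ldots,d\}$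 sends $k$ to $0$ if $\langle k,\tau\rangle\notin S$ and to $1+\#\{s\in S:s<\langle k,\tau\rangle\}$ otherwise. $(\tau,R)$ is generic if $\Psi(\tau,R)$ is injective and never $0$. For $\psi=\Psi(\tau,R)$ with $(\tau,R)$ generic: $\mathcal{R}_\psi=\{R'\in(-1,1)^{M+1}: a(R',k)\ne0\ \forall k\in\mathfrak{L}^\tau_M\}$, and $U_\psi=\{\tau'\in\mathbb{R}^{M+1}_{>0}:\Psi(\tau',R')=\psi\text{ for all }R'\in\mathcal{R}_\psi\}$ (equality of functions, including equality of domains $\mathfrak{L}^{\tau'}_M=\mathfrak{L}^\tau_M$). *)

(* Defs.v *)
From Stdlib Require Import Reals Lra Lia ZArith Arith List.
Import ListNotations.
Open Scope R_scope.

(* Vectors in R^{M+1} / Z^{M+1} are encoded as functions on nat; only the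
   coordinates 0..M are ever used.  Multi-indices k are nat -> nat and, to
   have a canonical representative, are required to vanish beyond M. *)

Fixpoint sumR (f : nat -> R) (n : nat) : R :=
  match n with O => 0 | S m => sumR f m + f m end.
Fixpoint prodR (f : nat -> R) (n : nat) : R :=
  match n with O => 1 | S m => prodR f m * f m end.

Definition dot (M : nat) (k : nat -> nat) (tau : nat -> R) : R :=
  sumR (fun n => INR (k n) * tau n) (S M).
Definition one_dot (M : nat) (tau : nat -> R) : R := sumR tau (S M).

Definition pos_vec (M : nat) (tau : nat -> R) : Prop :=
  forall n, (n <= M)%nat -> 0 < tau n.
Definition cube_vec (M : nat) (x : nat -> R) : Prop :=
  forall n, (n <= M)%nat -> -1 < x n < 1.

Definition inLM (M : nat) (k : nat -> nat) : Prop :=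
  k 0%nat = 1%nat /\
  (forall n, (1 <= n <= M)%nat -> (0 < k n)%nat -> (0 < k (n - 1))%nat) /\
  (forall n, (M < n)%nat -> k n = 0%nat).

Definition inL (M : nat) (tau : nat -> R) (k : nat -> nat) : Prop :=
  inLM M k /\ dot M k tau <= one_dot M tau.

Definition ktil (M : nat) (k : nat -> nat) (n : nat) : nat :=
  if (n <? M)%nat then k (S n) else 0%nat.
Definition ulow (M : nat) (k : nat -> nat) (n : nat) : nat :=
  Nat.min 1 (ktil M k n).
Definition uhigh (M : nat) (k : nat -> nat) (n : nat) : nat :=
  Nat.min (k n) (ktil M k n).

Definition upd (b : nat -> nat) (n v : nat) : nat -> nat :=
  fun i => if Nat.eqb i n then v else b i.

Fixpoint boxl (lo hi : nat -> nat) (n : nat) : list (nat -> nat) :=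
  match n with
  | O => [fun _ => 0%nat]
  | S m => flat_map (fun b => map (fun v => upd b m v)
                                  (seq (lo m) (S (hi m) - lo m)))
                    (boxl lo hi m)
  end.

Definition Vk (M : nat) (k : nat -> nat) : list (nat -> nat) :=
  boxl (ulow M k) (uhigh M k) (S M).

Definition a_term (M : nat) (x : nat -> R) (k b : nat -> nat) : R :=
  prodR (fun n =>
     C (k n) (b n)
     * C (ktil M k n - ulow M k n) (b n - ulow M k n)
     * (- x n) ^ (ktil M k n - b n)
     * (x n) ^ (k n - b n)
     * (1 - (x n) ^ 2) ^ (b n)) (S M).

Definition amp (M : nat) (x : nat -> R) (k : nat -> nat) : R :=
  fold_right Rplus 0 (map (a_term M x k) (Vk M k)).

Definition inLb (M : nat) (tau : nat -> R) (k : nat -> nat) : bool :=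
  Nat.eqb (k 0%nat) 1 &&
  forallb (fun n => implb (0 <? k n)%nat (0 <? k (n - 1))%nat) (seq 1 M) &&
  (if Rle_dec (dot M k tau) (one_dot M tau) then true else false).

(* coordinate bounds: k n * tau n <= <1,tau> forces k n < up(<1,tau>/tau n) *)
Definition kbound (M : nat) (tau : nat -> R) (n : nat) : nat :=
  Z.to_nat (up (one_dot M tau / tau n)).

Definition Ltau (M : nat) (tau : nat -> R) : list (nat -> nat) :=
  filter (inLb M tau) (boxl (fun _ => 0%nat) (kbound M tau) (S M)).

(* coefficient of delta(t - s) in D^(tau,R) *)
Definition coef (M : nat) (tau x : nat -> R) (s : R) : R :=
  fold_right Rplus 0
    (map (fun k => if Req_dec_T (dot M k tau) s then amp M x k else 0)
         (Ltau M tau)).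

Definition Ssupp (M : nat) (tau x : nat -> R) : list R :=
  nodup Req_dec_T
    (filter (fun s => if Req_dec_T (coef M tau x s) 0 then false else true)
            (map (fun k => dot M k tau) (Ltau M tau))).

Definition Psi (M : nat) (tau x : nat -> R) (k : nat -> nat) : nat :=
  let s := dot M k tau in
  let Sl := Ssupp M tau x in
  if in_dec Req_dec_T s Sl
  then Datatypes.S (length (filter (fun s' => if Rlt_dec s' s then true else false) Sl))
  else 0%nat.

Definition generic (M : nat) (tau x : nat -> R) : Prop :=
  (forall k, inL M tau k -> Psi M tau x k <> 0%nat) /\
  (forall k k', inL M tau k -> inL M tau k' ->
     Psi M tau x k = Psi M tau x k' -> forall n, k n = k' n).

(* R_psi, for psi = Psi(tau,R): its domain is L^tau_M *)
Definition Rpsi (M : nat) (tau : nat -> R) (x' : nat -> R) : Prop :=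
  cube_vec M x' /\ forall k, inL M tau k -> amp M x' k <> 0.

Definition Upsi (M : nat) (tau x : nat -> R) (tau' : nat -> R) : Prop :=
  pos_vec M tau' /\
  forall x', Rpsi M tau x' ->
    (forall k, inL M tau' k <-> inL M tau k) /\
    (forall k, inL M tau k -> Psi M tau' x' k = Psi M tau x k).

Definition open_vec (M : nat) (A : (nat -> R) -> Prop) : Prop :=
  forall y, A y -> exists eps, 0 < eps /\
    forall z, (forall n, (n <= M)%nat -> Rabs (z n - y n) < eps) -> A z.

Definition convex_vec (A : (nat -> R) -> Prop) : Prop :=
  forall y z (l : R), A y -> A z -> 0 <= l <= 1 ->
    A (fun n => l * y n + (1 - l) * z n).

(* Main.v *)
Require Import Defs.
From Stdlib Require Import Reals Lra Lia ZArith Arith List Permutation FunctionalExtensionality Classical.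
Import ListNotations.
Open Scope R_scope.

Definition nb (M:nat) (y:nat->R) (P:(nat->R)->Prop) : Prop :=
  exists d, 0 < d /\ forall z, (forall n, (n <= M)%nat -> Rabs (z n - y n) < d) -> P z.

Lemma nb_true M y : nb M y (fun _ => True).
Proof. exists 1; split; [lra|auto]. Qed.

Lemma nb_and M y (P Q : (nat->R)->Prop) : nb M y P -> nb M y Q -> nb M y (fun z => P z /\ Q z).
Proof.
  intros [d1 [H1 P1]] [d2 [H2 P2]]. exists (Rmin d1 d2); split.
  - apply Rmin_pos; auto.
  - intros z Hz; split; [apply P1|apply P2]; intros n Hn; specialize (Hz n Hn);
    pose proof (Rmin_l d1 d2); pose proof (Rmin_r d1 d2); lra.
Qed.

Lemma nb_mono M y (P Q : (nat->R)->Prop) : (forall z, P z -> Q z) -> nb M y P -> nb M y Q.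
Proof. intros H [d [Hd Hp]]. exists d; split; auto. Qed.

Lemma nb_list {A} M y (l : list A) (P : A -> (nat->R) -> Prop) :
  (forall a, In a l -> nb M y (P a)) -> nb M y (fun z => forall a, In a l -> P a z).
Proof.
  induction l as [|b l IH]; intros H.
  - eapply nb_mono; [|apply nb_true]. intros z _ a [].
  - eapply nb_mono; [|apply nb_and; [apply (H b); left; auto| apply IH; intros; apply H; right; auto]].
    intros z [Hb Hl] a [<-|Ha]; auto.
Qed.

Lemma nb_upto M y (P : nat -> (nat->R)->Prop) :
  (forall n, (n<=M)%nat -> nb M y (P n)) -> nb M y (fun z => forall n, (n<=M)%nat -> P n z).
Proof.
  intros H. eapply nb_mono; [|apply (nb_list M y (seq 0 (S M)) P)].
  - intros z Hz n Hn. apply Hz. apply in_seq; lia.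
  - intros a Ha. apply in_seq in Ha. apply H; lia.
Qed.

Definition cont M (f : (nat->R)->R) := forall y e, 0 < e -> nb M y (fun z => Rabs (f z - f y) < e).

Lemma cont_const M c : cont M (fun _ => c).
Proof. intros y e He. exists 1; split; [lra|]. intros z _. rewrite Rminus_diag, Rabs_R0; auto. Qed.

Lemma cont_coord M n : (n <= M)%nat -> cont M (fun z => z n).
Proof. intros Hn y e He. exists e; split; auto. Qed.

Lemma cont_plus M f g : cont M f -> cont M g -> cont M (fun z => f z + g z).
Proof.
  intros Hf Hg y e He.
  eapply nb_mono; [|apply nb_and; [apply (Hf y (e/2))|apply (Hg y (e/2))]]; try lra.
  intros z [H1 H2]. replace (f z + g z - (f y + g y)) with ((f z - f y) + (g z - g y)) by ring.
  pose proof (Rabs_triang (f z - f y) (g z - g y)). lra.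
Qed.

Lemma cont_opp M f : cont M f -> cont M (fun z => - f z).
Proof.
  intros Hf y e He. eapply nb_mono; [|apply (Hf y e He)]. intros z H.
  replace (- f z - - f y) with (- (f z - f y)) by ring. rewrite Rabs_Ropp; auto.
Qed.

Lemma cont_mult M f g : cont M f -> cont M g -> cont M (fun z => f z * g z).
Proof.
  intros Hf Hg y e He.
  set (a := f y). set (b := g y).
  assert (Ha : 0 <= Rabs a) by apply Rabs_pos.
  assert (Hb : 0 <= Rabs b) by apply Rabs_pos.
  set (e1 := e / (2 * (Rabs b + 1))).
  set (e2 := Rmin 1 (e / (2 * (Rabs a + 1)))).
  assert (He1 : 0 < e1) by (unfold e1; apply Rdiv_lt_0_compat; lra).
  assert (He2 : 0 < e2) by (unfold e2; apply Rmin_pos; [lra|apply Rdiv_lt_0_compat; lra]).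
  eapply nb_mono; [|apply nb_and; [apply (Hf y e1 He1)|apply (Hg y e2 He2)]].
  intros z [H1 H2]. fold a b in H1, H2 |- *.
  replace (f z * g z - a * b) with ((f z - a) * g z + a * (g z - b)) by ring.
  pose proof (Rabs_triang ((f z - a) * g z) (a * (g z - b))).
  rewrite !Rabs_mult in H.
  assert (Hgz : Rabs (g z) <= Rabs b + 1).
  { replace (g z) with (b + (g z - b)) by ring. pose proof (Rabs_triang b (g z - b)).
    pose proof (Rmin_l 1 (e / (2 * (Rabs a + 1)))). fold e2 in H3. lra. }
  assert (A1 : Rabs (f z - a) * Rabs (g z) <= e1 * (Rabs b + 1)).
  { apply Rmult_le_compat; try apply Rabs_pos; lra. }
  assert (A2 : Rabs a * Rabs (g z - b) <= Rabs a * (e / (2 * (Rabs a + 1)))).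
  { apply Rmult_le_compat_l; auto. pose proof (Rmin_r 1 (e / (2 * (Rabs a + 1)))). fold e2 in H0. lra. }
  assert (E1 : e1 * (Rabs b + 1) = e/2) by (unfold e1; field; lra).
  assert (E2 : Rabs a * (e / (2 * (Rabs a + 1))) < e/2).
  { apply (Rmult_lt_reg_r (2 * (Rabs a + 1))); [lra|].
    replace (Rabs a * (e / (2 * (Rabs a + 1))) * (2 * (Rabs a + 1))) with (Rabs a * e) by (field; lra).
    nra. }
  lra.
Qed.

Lemma cont_pow M f k : cont M f -> cont M (fun z => (f z)^k).
Proof.
  intros Hf. induction k; simpl.
  - apply cont_const.
  - apply cont_mult; auto.
Qed.

Lemma cont_sumR M (F : (nat->R)->nat->R) N :
  (forall n, (n<N)%nat -> cont M (fun z => F z n)) -> cont M (fun z => sumR (F z) N).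
Proof.
  induction N; intros H; simpl.
  - apply cont_const.
  - apply cont_plus; [apply IHN; intros; apply H; lia| apply H; lia].
Qed.

Lemma cont_prodR M (F : (nat->R)->nat->R) N :
  (forall n, (n<N)%nat -> cont M (fun z => F z n)) -> cont M (fun z => prodR (F z) N).
Proof.
  induction N; intros H; simpl.
  - apply cont_const.
  - apply cont_mult; [apply IHN; intros; apply H; lia| apply H; lia].
Qed.

Lemma cont_fold {A} M (h : (nat->R) -> A -> R) l :
  (forall a, In a l -> cont M (fun z => h z a)) ->
  cont M (fun z => fold_right Rplus 0 (map (h z) l)).
Proof.
  induction l as [|b l IH]; intros H; simpl.
  - apply cont_const.
  - apply cont_plus; [apply H; left; auto| apply IH; intros; apply H; right; auto].
Qed.

Lemma cont_amp M k : cont M (fun z => amp M z k).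
Proof.
  unfold amp. apply (cont_fold M (fun z b => a_term M z k b)). intros b _.
  unfold a_term. apply cont_prodR. intros n Hn.
  repeat apply cont_mult; try apply cont_const; apply cont_pow;
  try apply cont_opp; try apply cont_plus; try apply cont_const; try apply cont_opp;
  try apply cont_pow; apply cont_coord; lia.
Qed.

Lemma cont_dot M k : cont M (fun z => dot M k z).
Proof. unfold dot. apply cont_sumR. intros n Hn. apply cont_mult; [apply cont_const|apply cont_coord; lia]. Qed.

Lemma cont_one M : cont M (fun z => one_dot M z).
Proof. unfold one_dot. apply cont_sumR. intros n Hn. apply cont_coord; lia. Qed.

Lemma cont_gt M f y c : cont M f -> c < f y -> nb M y (fun z => c < f z).
Proof.
  intros Hf Hc. eapply nb_mono; [|apply (Hf y (f y - c)); lra].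
  intros z Hz. apply Rabs_def2 in Hz. lra.
Qed.

Lemma cont_lt M f y c : cont M f -> f y < c -> nb M y (fun z => f z < c).
Proof.
  intros Hf Hc. eapply nb_mono; [|apply (Hf y (c - f y)); lra].
  intros z Hz. apply Rabs_def2 in Hz. lra.
Qed.

Lemma cont_neq M f y : cont M f -> f y <> 0 -> nb M y (fun z => f z <> 0).
Proof.
  intros Hf Hc. eapply nb_mono; [|apply (Hf y (Rabs (f y))); apply Rabs_pos_lt; auto].
  intros z Hz E. simpl in Hz. rewrite E in Hz. rewrite Rminus_0_l, Rabs_Ropp in Hz. lra.
Qed.

Lemma boxl_zero lo hi n b : In b (boxl lo hi n) -> forall i, (n <= i)%nat -> b i = 0%nat.
Proof.
  revert b; induction n; intros b Hb i Hi; simpl in Hb.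
  - destruct Hb as [<-|[]]; auto.
  - apply in_flat_map in Hb. destruct Hb as [b' [Hb' Hm]].
    apply in_map_iff in Hm. destruct Hm as [v [<- _]].
    unfold upd. destruct (Nat.eqb_spec i n); [lia|]. apply IHn; auto; lia.
Qed.

Lemma boxl_in lo hi n b : (forall i, (i < n)%nat -> (lo i <= b i <= hi i)%nat) ->
  (forall i, (n <= i)%nat -> b i = 0%nat) -> In b (boxl lo hi n).
Proof.
  revert b; induction n; intros b H1 H2; simpl.
  - left. apply functional_extensionality. intros i. symmetry. apply H2. lia.
  - apply in_flat_map. exists (upd b n 0%nat). split.
    + apply IHn.
      * intros i Hi. unfold upd. destruct (Nat.eqb_spec i n); [lia|]. apply H1; lia.
      * intros i Hi. unfold upd. destruct (Nat.eqb_spec i n); auto. apply H2; lia.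
    + apply in_map_iff. exists (b n). split.
      * apply functional_extensionality. intros i. unfold upd. destruct (Nat.eqb_spec i n); subst; auto.
      * apply in_seq. specialize (H1 n ltac:(lia)). destruct (lo n); lia.
Qed.

Lemma sumR_nonneg f N : (forall i, (i < N)%nat -> 0 <= f i) -> 0 <= sumR f N.
Proof. induction N; intros H; simpl; [lra|]. pose proof (H N). assert (0 <= sumR f N) by (apply IHN; intros; apply H; lia). specialize (H0 ltac:(lia)). lra. Qed.

Lemma sumR_ge_term f N n : (forall i, (i < N)%nat -> 0 <= f i) -> (n < N)%nat -> f n <= sumR f N.
Proof.
  induction N; intros H Hn; [lia|]. simpl.
  destruct (Nat.eq_dec n N).
  - subst. pose proof (sumR_nonneg f N ltac:(intros; apply H; lia)). lra.
  - pose proof (IHN ltac:(intros; apply H; lia) ltac:(lia)). pose proof (H N ltac:(lia)). lra.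
Qed.

Lemma dot_ge_term M k t n : pos_vec M t -> (n <= M)%nat -> INR (k n) * t n <= dot M k t.
Proof.
  intros Ht Hn. unfold dot. apply (sumR_ge_term (fun n => INR (k n) * t n)); [|lia].
  intros i Hi. apply Rmult_le_pos; [apply pos_INR| left; apply Ht; lia].
Qed.

Lemma Ltau_inL M t k : In k (Ltau M t) -> inL M t k.
Proof.
  unfold Ltau. intros H. apply filter_In in H. destruct H as [Hb Hk].
  unfold inLb in Hk. apply andb_prop in Hk. destruct Hk as [Hk Hle].
  apply andb_prop in Hk. destruct Hk as [H0 Hch].
  split; [split; [|split]|].
  - apply Nat.eqb_eq; auto.
  - intros n Hn Hp. rewrite forallb_forall in Hch. specialize (Hch n ltac:(apply in_seq; lia)).
    apply Nat.ltb_lt in Hp. rewrite Hp in Hch. simpl in Hch. apply Nat.ltb_lt; auto.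
  - intros n Hn. apply (boxl_zero _ _ _ _ Hb). lia.
  - destruct (Rle_dec (dot M k t) (one_dot M t)); auto. discriminate.
Qed.

Lemma inL_Ltau M t k : pos_vec M t -> inL M t k -> In k (Ltau M t).
Proof.
  intros Ht [[H0 [Hch Hz]] Hle]. unfold Ltau. apply filter_In. split.
  - apply boxl_in.
    + intros i Hi. split; [lia|]. unfold kbound.
      pose proof (dot_ge_term M k t i Ht ltac:(lia)).
      pose proof (Ht i ltac:(lia)).
      assert (INR (k i) <= one_dot M t / t i).
      { apply (Rmult_le_reg_r (t i)); auto. unfold Rdiv. rewrite Rmult_assoc, Rinv_l; lra. }
      destruct (archimed (one_dot M t / t i)) as [A _].
      rewrite INR_IZR_INZ in H2. assert (IZR (Z.of_nat (k i)) < IZR (up (one_dot M t / t i))) by lra.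
      apply lt_IZR in H3. lia.
    + intros i Hi. apply Hz. lia.
  - unfold inLb. rewrite H0. simpl.
    assert (forallb (fun n => implb (0 <? k n)%nat (0 <? k (n - 1))%nat) (seq 1 M) = true) as ->.
    { apply forallb_forall. intros n Hn. apply in_seq in Hn.
      destruct (Nat.ltb_spec 0 (k n)); simpl; auto. apply Nat.ltb_lt. apply Hch; auto; lia. }
    simpl. destruct (Rle_dec (dot M k t) (one_dot M t)); auto.
Qed.

Definition flt (s : R) (l : list R) : list R :=
  filter (fun s' => if Rlt_dec s' s then true else false) l.

Lemma flt_mono s s' l : s <= s' -> (length (flt s l) <= length (flt s' l))%nat.
Proof.
  intros H. induction l as [|a l IH]; simpl; auto.
  destruct (Rlt_dec a s); destruct (Rlt_dec a s'); simpl; try lia. lra.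
Qed.

Lemma flt_strict s s' l : In s l -> s < s' -> (length (flt s l) < length (flt s' l))%nat.
Proof.
  intros Hin H. unfold flt. induction l as [|a l IH]; simpl; [destruct Hin|].
  destruct Hin as [->|Hin].
  - destruct (Rlt_dec s s); [lra|]. destruct (Rlt_dec s s'); [|lra]. simpl.
    pose proof (flt_mono s s' l ltac:(lra)). unfold flt in H0. lia.
  - specialize (IH Hin).
    destruct (Rlt_dec a s); destruct (Rlt_dec a s'); simpl; unfold flt in IH; try lia. lra.
Qed.

Lemma filter_perm_len {A} (f : A -> bool) l l' : Permutation l l' -> length (filter f l) = length (filter f l').
Proof.
  induction 1; simpl; auto.
  - destruct (f x); simpl; auto.
  - destruct (f x); destruct (f y); simpl; auto.
  - congruence.
Qed.

Lemma filter_all {A} (f : A -> bool) l : (forall a, In a l -> f a = true) -> filter f l = l.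
Proof.
  induction l as [|a l IH]; intros H; simpl; auto.
  rewrite H by (left; auto). rewrite IH; auto. intros; apply H; right; auto.
Qed.

Lemma nodup_order {A} (f g : A -> R) (l : list A) (cf cg : R) :
  (forall a, In a l -> (f a < cf <-> g a < cg)) ->
  (forall a b, In a l -> In b l -> (f a = f b <-> g a = g b)) ->
  length (flt cf (nodup Req_dec_T (map f l))) = length (flt cg (nodup Req_dec_T (map g l))).
Proof.
  induction l as [|a l IH]; intros H1 H2; simpl; auto.
  assert (IH' := IH ltac:(intros; apply H1; right; auto) ltac:(intros; apply H2; right; auto)).
  assert (Hiff : In (f a) (map f l) <-> In (g a) (map g l)).
  { split; intros Hi; apply in_map_iff in Hi; destruct Hi as [b [Eb Hb]]; apply in_map_iff; exists b; split; auto.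
    - apply (H2 b a); [right|left|]; auto.
    - apply (H2 b a); [right|left|]; auto. }
  destruct (in_dec Req_dec_T (f a) (map f l)); destruct (in_dec Req_dec_T (g a) (map g l)); try tauto.
  unfold flt in *. simpl.
  assert (Hl := H1 a ltac:(left; auto)).
  destruct (Rlt_dec (f a) cf); destruct (Rlt_dec (g a) cg); simpl; try tauto; lia.
Qed.

Lemma Psi_dot M t x k k' : dot M k t = dot M k' t -> Psi M t x k = Psi M t x k'.
Proof. intros E. unfold Psi. rewrite E. auto. Qed.

Lemma Psi_in M t x k : In (dot M k t) (Ssupp M t x) ->
  Psi M t x k = S (length (flt (dot M k t) (Ssupp M t x))).
Proof. intros H. unfold Psi. destruct (in_dec Req_dec_T (dot M k t) (Ssupp M t x)); [auto|tauto]. Qed.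

Lemma Psi_nz M t x k : Psi M t x k <> 0%nat -> In (dot M k t) (Ssupp M t x).
Proof. unfold Psi. destruct (in_dec Req_dec_T (dot M k t) (Ssupp M t x)); auto. tauto. Qed.

Lemma PsiOrder M t x k k' : Psi M t x k <> 0%nat -> Psi M t x k' <> 0%nat ->
  (dot M k t < dot M k' t <-> (Psi M t x k < Psi M t x k')%nat).
Proof.
  intros H1 H2. apply Psi_nz in H1. apply Psi_nz in H2.
  rewrite (Psi_in _ _ _ _ H1), (Psi_in _ _ _ _ H2). split.
  - intros H. pose proof (flt_strict _ _ _ H1 H). lia.
  - intros H. destruct (Rlt_dec (dot M k t) (dot M k' t)); auto.
    destruct (Req_dec_T (dot M k t) (dot M k' t)) as [E|E].
    + rewrite E in H. lia.
    + assert (dot M k' t < dot M k t) by lra. pose proof (flt_strict _ _ _ H2 H0). lia.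
Qed.

Definition Dist M t := forall k k', inL M t k -> inL M t k' -> dot M k t = dot M k' t -> k = k'.

Lemma coef_eq M t x' a : Dist M t -> inL M t a ->
  exists n, coef M t x' (dot M a t) = INR n * amp M x' a /\ (In a (Ltau M t) -> (1 <= n)%nat).
Proof.
  intros HD Ha. unfold coef.
  assert (forall l, (forall b, In b l -> In b (Ltau M t)) -> exists n,
    fold_right Rplus 0 (map (fun k => if Req_dec_T (dot M k t) (dot M a t) then amp M x' k else 0) l)
    = INR n * amp M x' a /\ (In a l -> (1 <= n)%nat)) as G.
  { induction l as [|b l IH]; intros Hl; simpl.
    - exists 0%nat. split; [simpl; ring| tauto].
    - destruct IH as [n [E Hn]]; [intros; apply Hl; right; auto|].
      destruct (Req_dec_T (dot M b t) (dot M a t)) as [Eb|Eb].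
      + assert (b = a) by (apply HD; auto; apply Ltau_inL; apply Hl; left; auto). subst b.
        exists (S n). split; [rewrite E, S_INR; ring| intros; lia].
      + exists n. split; [rewrite E; ring|]. intros [<-|Hi]; [tauto|auto]. }
  apply G. auto.
Qed.

Lemma Ssupp_full M t x' : Dist M t -> (forall k, inL M t k -> amp M x' k <> 0) ->
  Ssupp M t x' = nodup Req_dec_T (map (fun k => dot M k t) (Ltau M t)).
Proof.
  intros HD HA. unfold Ssupp. f_equal. apply filter_all.
  intros s Hs. apply in_map_iff in Hs. destruct Hs as [a [<- Ha]].
  assert (Ha' := Ltau_inL _ _ _ Ha).
  destruct (coef_eq M t x' a HD Ha') as [n [E Hn]]. specialize (Hn Ha).
  destruct (Req_dec_T (coef M t x' (dot M a t)) 0) as [Z|]; auto.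
  rewrite E in Z. apply Rmult_integral in Z. destruct Z as [Z|Z].
  - apply (lt_INR 0 n) in Hn. simpl in Hn. lra.
  - exfalso; apply (HA a); auto.
Qed.

Lemma Psi_formula M t x' k : pos_vec M t -> Dist M t -> (forall k, inL M t k -> amp M x' k <> 0) ->
  inL M t k -> Psi M t x' k = S (length (flt (dot M k t) (nodup Req_dec_T (map (fun k => dot M k t) (Ltau M t))))).
Proof.
  intros Hp HD HA Hk. rewrite <- (Ssupp_full M t x' HD HA). apply Psi_in.
  rewrite (Ssupp_full M t x' HD HA). apply nodup_In. apply in_map_iff. exists k. split; auto. apply inL_Ltau; auto.
Qed.

Lemma gen_Dist M tau x : generic M tau x -> Dist M tau.
Proof.
  intros [G1 G2] k k' Hk Hk' E. apply functional_extensionality.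
  apply (G2 k k' Hk Hk'). apply Psi_dot; auto.
Qed.

Lemma gen_amp M tau x k : generic M tau x -> inL M tau k -> amp M x k <> 0.
Proof.
  intros G Hk Z. assert (HD := gen_Dist _ _ _ G).
  destruct G as [G1 _]. apply G1 in Hk as Hp. apply Psi_nz in Hp.
  unfold Ssupp in Hp. apply nodup_In in Hp. apply filter_In in Hp. destruct Hp as [_ Hc].
  destruct (coef_eq M tau x k HD Hk) as [n [E _]]. rewrite E, Z, Rmult_0_r in Hc.
  destruct (Req_dec_T 0 0); [discriminate|tauto].
Qed.

Lemma gen_Rpsi M tau x : cube_vec M x -> generic M tau x -> Rpsi M tau x.
Proof. intros Hc G. split; auto. intros k Hk. apply (gen_amp M tau x); auto. Qed.

Definition Cond M tau t : Prop :=
  pos_vec M t /\ (forall k, inL M t k <-> inL M tau k) /\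
  (forall k k', inL M tau k -> inL M tau k' -> (dot M k tau < dot M k' tau <-> dot M k t < dot M k' t)).

Lemma Cond_Upsi M tau x t : pos_vec M tau -> generic M tau x -> Cond M tau t -> Upsi M tau x t.
Proof.
  intros Hpt G [Hp [HL HO]]. split; auto. intros x' [Hcx HA].
  split; auto. intros k Hk.
  assert (HDt := gen_Dist _ _ _ G).
  assert (HD : Dist M t).
  { intros a b Ha Hb E. apply HL in Ha. apply HL in Hb.
    destruct (Req_dec_T (dot M a tau) (dot M b tau)) as [E'|E']; [apply HDt; auto|].
    exfalso. destruct (Rlt_dec (dot M a tau) (dot M b tau)).
    - apply (HO a b Ha Hb) in r. lra.
    - assert (dot M b tau < dot M a tau) by lra. apply (HO b a Hb Ha) in H. lra. }
  assert (HA' : forall k, inL M t k -> amp M x' k <> 0) by (intros; apply HA; apply HL; auto).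
  assert (HAx : forall k, inL M tau k -> amp M x k <> 0) by (intros; apply (gen_amp M tau x); auto).
  rewrite (Psi_formula M t x' k Hp HD HA' ltac:(apply HL; auto)).
  rewrite (Psi_formula M tau x k Hpt HDt HAx Hk).
  f_equal. unfold flt.
  rewrite (filter_perm_len _ _ (nodup Req_dec_T (map (fun k => dot M k t) (Ltau M tau)))).
  - symmetry. apply nodup_order.
    + intros a Ha. apply Ltau_inL in Ha. apply HO; auto.
    + intros a b Ha Hb. apply Ltau_inL in Ha. apply Ltau_inL in Hb. split; intros E.
      * rewrite (HDt a b Ha Hb E); auto.
      * rewrite (HD a b ltac:(apply HL; auto) ltac:(apply HL; auto) E); auto.
  - apply NoDup_Permutation; try apply NoDup_nodup.
    intros s. rewrite !nodup_In, !in_map_iff. split; intros [a [Ea Ha]]; exists a; split; auto;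
    apply Ltau_inL in Ha; apply inL_Ltau; auto; apply HL; auto.
Qed.

Lemma Upsi_Cond M tau x t : cube_vec M x -> generic M tau x -> Upsi M tau x t -> Cond M tau t.
Proof.
  intros Hc G [Hp HU]. destruct (HU x (gen_Rpsi M tau x Hc G)) as [HL HP].
  split; [auto|split; [auto|]].
  intros k k' Hk Hk'. destruct G as [G1 G2].
  rewrite (PsiOrder M tau x k k' (G1 k Hk) (G1 k' Hk')).
  rewrite (PsiOrder M t x k k').
  - rewrite HP, (HP k'); auto. tauto.
  - rewrite HP; auto.
  - rewrite HP; auto.
Qed.

Lemma sumR_lin f g l N : sumR (fun n => l * f n + (1 - l) * g n) N = l * sumR f N + (1 - l) * sumR g N.
Proof. induction N; simpl; [ring|]. rewrite IHN. ring. Qed.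

Lemma dot_lin M k y z l : dot M k (fun n => l * y n + (1 - l) * z n) = l * dot M k y + (1 - l) * dot M k z.
Proof.
  unfold dot. rewrite <- sumR_lin. f_equal. apply functional_extensionality; intros; ring.
Qed.

Lemma Cond_Dist M tau x t : generic M tau x -> Cond M tau t -> Dist M t.
Proof.
  intros G [Hp [HL HO]]. assert (HDt := gen_Dist _ _ _ G).
  intros a b Ha Hb E. apply HL in Ha. apply HL in Hb.
  destruct (Req_dec_T (dot M a tau) (dot M b tau)) as [E'|E']; [apply HDt; auto|].
  exfalso. destruct (Rlt_dec (dot M a tau) (dot M b tau)).
  - apply (HO a b Ha Hb) in r. lra.
  - assert (dot M b tau < dot M a tau) by lra. apply (HO b a Hb Ha) in H. lra.
Qed.

Lemma Cond_self M tau : pos_vec M tau -> Cond M tau tau.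
Proof. intros Hp. split; auto. split; intros; tauto. Qed.

Lemma Cond_convex M tau x y z l : generic M tau x -> Cond M tau y -> Cond M tau z -> 0 <= l <= 1 ->
  Cond M tau (fun n => l * y n + (1 - l) * z n).
Proof.
  intros G Cy Cz Hl. assert (HDt := gen_Dist _ _ _ G).
  destruct Cy as [Py [Ly Oy]]. destruct Cz as [Pz [Lz Oz]].
  assert (Eone : one_dot M (fun n => l * y n + (1 - l) * z n) = l * one_dot M y + (1 - l) * one_dot M z)
    by (unfold one_dot; apply sumR_lin).
  split; [|split].
  - intros n Hn. specialize (Py n Hn). specialize (Pz n Hn). nra.
  - intros k. split.
    + intros [Hk Hd]. rewrite dot_lin, Eone in Hd.
      destruct (classic (inL M tau k)) as [H|H]; auto. exfalso.
      assert (A1 : one_dot M y < dot M k y).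
      { destruct (Rlt_dec (one_dot M y) (dot M k y)); auto. exfalso; apply H, Ly; split; auto; lra. }
      assert (A2 : one_dot M z < dot M k z).
      { destruct (Rlt_dec (one_dot M z) (dot M k z)); auto. exfalso; apply H, Lz; split; auto; lra. }
      assert (B1 : 0 <= l * (dot M k y - one_dot M y)) by (apply Rmult_le_pos; lra).
      assert (B2 : 0 <= (1 - l) * (dot M k z - one_dot M z)) by (apply Rmult_le_pos; lra).
      destruct (Req_dec_T l 0) as [L0|L0].
      * subst l. lra.
      * assert (0 < l * (dot M k y - one_dot M y)) by (apply Rmult_lt_0_compat; lra). lra.
    + intros Hk. destruct (proj2 (Ly k) Hk) as [Hk1 Hk2]. destruct (proj2 (Lz k) Hk) as [_ Hk3]. split; auto.
      rewrite dot_lin, Eone.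
      assert (l * dot M k y <= l * one_dot M y) by (apply Rmult_le_compat_l; lra).
      assert ((1-l) * dot M k z <= (1-l) * one_dot M z) by (apply Rmult_le_compat_l; lra). lra.
  - intros k k' Hk Hk'. rewrite !dot_lin. split.
    + intros H. pose proof (proj1 (Oy k k' Hk Hk') H). pose proof (proj1 (Oz k k' Hk Hk') H).
      destruct (Req_dec_T l 0) as [L0|L0]; [subst l; lra|].
      assert (l * dot M k y < l * dot M k' y) by (apply Rmult_lt_compat_l; lra).
      assert ((1-l) * dot M k z <= (1-l) * dot M k' z) by (apply Rmult_le_compat_l; lra). lra.
    + intros H. destruct (Rlt_dec (dot M k tau) (dot M k' tau)) as [r|r]; auto.
      destruct (Req_dec_T (dot M k tau) (dot M k' tau)) as [E|E].
      * rewrite (HDt k k' Hk Hk' E) in H. lra.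
      * assert (H' : dot M k' tau < dot M k tau) by lra.
        pose proof (proj1 (Oy k' k Hk' Hk) H'). pose proof (proj1 (Oz k' k Hk' Hk) H').
        destruct (Req_dec_T l 0) as [L0|L0]; [subst l; lra|].
        assert (l * dot M k' y < l * dot M k y) by (apply Rmult_lt_compat_l; lra).
        assert ((1-l) * dot M k' z <= (1-l) * dot M k z) by (apply Rmult_le_compat_l; lra). lra.
Qed.

Definition onesv (M : nat) : nat -> nat := fun n => if (n <=? M)%nat then 1%nat else 0%nat.

Lemma sumR_ext f g N : (forall i, (i < N)%nat -> f i = g i) -> sumR f N = sumR g N.
Proof. induction N; intros H; simpl; auto. rewrite IHN, H; auto; intros; apply H; lia. Qed.

Lemma dot_ones M t : dot M (onesv M) t = one_dot M t.
Proof.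
  unfold dot, one_dot. apply sumR_ext. intros i Hi. unfold onesv.
  destruct (Nat.leb_spec i M); [simpl; ring|lia].
Qed.

Lemma ones_inL M t : inL M t (onesv M).
Proof.
  split; [split; [|split]|].
  - reflexivity.
  - intros n Hn _. unfold onesv. destruct (Nat.leb_spec (n-1) M); lia.
  - intros n Hn. unfold onesv. destruct (Nat.leb_spec n M); lia.
  - rewrite dot_ones. lra.
Qed.

Lemma min_pos M y : pos_vec M y -> exists m, 0 < m /\ forall n, (n <= M)%nat -> m <= y n.
Proof.
  intros Hp. induction M.
  - exists (y 0%nat). split; [apply Hp; lia|]. intros n Hn. replace n with 0%nat by lia. lra.
  - destruct IHM as [m [Hm H]]; [intros n Hn; apply Hp; lia|].
    exists (Rmin m (y (S M))). split; [apply Rmin_pos; auto; apply Hp; lia|].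
    intros n Hn. destruct (Nat.eq_dec n (S M)); [subst; apply Rmin_r|].
    pose proof (Rmin_l m (y (S M))). pose proof (H n ltac:(lia)). lra.
Qed.

Lemma one_pos M y : pos_vec M y -> 0 < one_dot M y.
Proof.
  intros Hp. unfold one_dot. pose proof (sumR_ge_term y (S M) 0 ltac:(intros; left; apply Hp; lia) ltac:(lia)).
  pose proof (Hp 0%nat ltac:(lia)). lra.
Qed.

Lemma cont_diff M f g : cont M f -> cont M g -> cont M (fun z => f z - g z).
Proof. intros. unfold Rminus. apply cont_plus; auto. apply cont_opp; auto. Qed.

Lemma Cond_open M tau x y : pos_vec M tau -> generic M tau x -> Cond M tau y -> nb M y (Cond M tau).
Proof.
  intros Hpt G Cy. assert (HDy := Cond_Dist _ _ _ _ G Cy).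
  destruct Cy as [Py [Ly Oy]].
  destruct (min_pos M y Py) as [m [Hm Hmy]].
  set (r := (one_dot M y + 1) / (m / 2)).
  assert (Hr : 0 < r) by (unfold r; pose proof (one_pos M y Py); apply Rdiv_lt_0_compat; lra).
  destruct (archimed r) as [Ar _].
  set (B := Z.to_nat (up r)).
  assert (HB : INR B * (m / 2) > one_dot M y + 1).
  { assert (INR B = IZR (up r)).
    { unfold B. rewrite INR_IZR_INZ. f_equal. apply Z2Nat.id. apply le_IZR. lra. }
    rewrite H. apply (Rmult_lt_reg_r (/ (m/2))). { apply Rinv_0_lt_compat; lra. }
    rewrite Rmult_assoc, Rinv_r by lra. rewrite Rmult_1_r. unfold r in Ar. exact Ar. }
  set (LT := Ltau M tau).
  set (BX := boxl (fun _ => 0%nat) (fun _ => B) (S M)).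
  assert (E1 : nb M y (fun z => forall n, (n <= M)%nat -> m / 2 < z n)).
  { apply nb_upto. intros n Hn. apply cont_gt; [apply cont_coord; auto|]. pose proof (Hmy n Hn). lra. }
  assert (E2 : nb M y (fun z => one_dot M z < one_dot M y + 1)).
  { apply cont_lt; [apply cont_one| lra]. }
  assert (E3 : nb M y (fun z => forall a, In a BX -> one_dot M y < dot M a y -> one_dot M z < dot M a z)).
  { apply nb_list. intros a _. destruct (Rlt_dec (one_dot M y) (dot M a y)).
    - eapply nb_mono; [|apply (cont_gt M (fun z => dot M a z - one_dot M z) y 0)].
      + intros z Hz _. lra.
      + apply cont_diff; [apply cont_dot|apply cont_one].
      + lra.
    - eapply nb_mono; [|apply nb_true]. intros. tauto. }
  assert (E4 : nb M y (fun z => forall a, In a LT -> dot M a y < one_dot M y -> dot M a z < one_dot M z)).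
  { apply nb_list. intros a _. destruct (Rlt_dec (dot M a y) (one_dot M y)).
    - eapply nb_mono; [|apply (cont_lt M (fun z => dot M a z - one_dot M z) y 0)].
      + intros z Hz _. lra.
      + apply cont_diff; [apply cont_dot|apply cont_one].
      + lra.
    - eapply nb_mono; [|apply nb_true]. intros. tauto. }
  assert (E5 : nb M y (fun z => forall a, In a LT -> forall b, In b LT -> dot M a y < dot M b y -> dot M a z < dot M b z)).
  { apply nb_list. intros a _. apply nb_list. intros b _. destruct (Rlt_dec (dot M a y) (dot M b y)).
    - eapply nb_mono; [|apply (cont_lt M (fun z => dot M a z - dot M b z) y 0)].
      + intros z Hz _. lra.
      + apply cont_diff; apply cont_dot.
      + lra.
    - eapply nb_mono; [|apply nb_true]. intros. tauto. }
  eapply nb_mono; [|apply nb_and; [apply E1|apply nb_and; [apply E2|apply nb_and; [apply E3|apply nb_and; [apply E4|apply E5]]]]].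
  intros z [H1 [H2 [H3 [H4 H5]]]].
  assert (Pz : pos_vec M z) by (intros n Hn; specialize (H1 n Hn); lra).
  split; [auto|split].
  - intros k. split.
    + intros [Hk Hd]. apply Ly. split; auto.
      destruct (Rle_dec (dot M k y) (one_dot M y)) as [r'|r']; auto. exfalso.
      destruct (classic (forall n, (n <= M)%nat -> (k n <= B)%nat)) as [Hb|Hb].
      * assert (In k BX).
        { apply boxl_in; [intros i Hi; split; [lia|apply Hb; lia]|]. intros i Hi. apply Hk. lia. }
        specialize (H3 k H ltac:(lra)). lra.
      * apply not_all_ex_not in Hb. destruct Hb as [n Hn].
        assert (Hn1 : (n <= M)%nat) by (apply NNPP; intros C; apply Hn; intros; lia).
        assert (Hn2 : (B < k n)%nat) by (apply NNPP; intros C; apply Hn; intros; lia).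
        pose proof (dot_ge_term M k z n Pz Hn1).
        assert (INR B <= INR (k n)) by (apply le_INR; lia).
        pose proof (H1 n Hn1). assert (0 <= INR B) by apply pos_INR.
        assert (INR B * (m/2) <= INR (k n) * z n) by (apply Rmult_le_compat; lra).
        lra.
    + intros Hk. assert (HkL : In k LT) by (apply inL_Ltau; auto).
      apply Ly in Hk as Hky. destruct Hky as [Hk1 Hk2]. split; auto.
      destruct Hk2 as [Hlt|Heq].
      * left. apply H4; auto.
      * assert (k = onesv M) by (apply HDy; [apply Ly; auto|apply ones_inL|rewrite dot_ones; auto]).
        subst k. rewrite dot_ones. lra.
  - intros k k' Hk Hk'. rewrite (Oy k k' Hk Hk'). split.
    + intros H. apply H5; auto; apply inL_Ltau; auto.
    + intros H. destruct (Rlt_dec (dot M k y) (dot M k' y)) as [r'|r']; auto.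
      destruct (Req_dec_T (dot M k y) (dot M k' y)) as [E|E].
      * rewrite (HDy k k' ltac:(apply Ly; auto) ltac:(apply Ly; auto) E) in H. lra.
      * assert (dot M k' y < dot M k y) by lra.
        pose proof (H5 k' ltac:(apply inL_Ltau; auto) k ltac:(apply inL_Ltau; auto) H0). lra.
Qed.

Lemma Rpsi_open M tau y : pos_vec M tau -> Rpsi M tau y -> nb M y (Rpsi M tau).
Proof.
  intros Hpt [Hc HA].
  assert (E1 : nb M y (fun z => forall n, (n <= M)%nat -> -1 < z n /\ z n < 1)).
  { apply nb_upto. intros n Hn. specialize (Hc n Hn). apply nb_and.
    - apply cont_gt; [apply cont_coord; auto|lra].
    - apply cont_lt; [apply cont_coord; auto|lra]. }
  assert (E2 : nb M y (fun z => forall a, In a (Ltau M tau) -> amp M y a <> 0 -> amp M z a <> 0)).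
  { apply nb_list. intros a _. destruct (Req_dec_T (amp M y a) 0).
    - eapply nb_mono; [|apply nb_true]. intros. tauto.
    - eapply nb_mono; [|apply (cont_neq M (fun z => amp M z a) y); auto; apply cont_amp]. intros; auto. }
  eapply nb_mono; [|apply (nb_and _ _ _ _ E1 E2)]. intros z [H1 H2]. split.
  - intros n Hn. apply H1; auto.
  - intros k Hk. apply H2; [apply inL_Ltau; auto|apply HA; auto].
Qed.
Theorem proposition4p2 (M : nat) (tau x : nat -> R) :
  (1 <= M)%nat ->
  pos_vec M tau -> cube_vec M x ->
  generic M tau x ->
  (convex_vec (Upsi M tau x) /\ open_vec M (Upsi M tau x) /\ Upsi M tau x tau) /\
  (open_vec M (Rpsi M tau) /\ Rpsi M tau x).
Proof.
  intros _ Hp Hc G. split; [split; [|split]|split].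
  - intros y z l Hy Hz Hl. apply Cond_Upsi; auto.
    apply (Cond_convex M tau x); auto; eapply Upsi_Cond; eauto.
  - intros y Hy. apply (Upsi_Cond M tau x y Hc G) in Hy.
    assert (H := Cond_open M tau x y Hp G Hy).
    apply (nb_mono M y (Cond M tau) (Upsi M tau x)) in H; [exact H|].
    intros z Hz. apply Cond_Upsi; auto.
  - apply Cond_Upsi; auto. apply Cond_self; auto.
  - intros y Hy. exact (Rpsi_open M tau y Hp Hy).
  - apply gen_Rpsi; auto.
Qed.
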